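(* Let $A\in\mathbb{R}^{m\times n}$, $b\in\mathbb{R}^m$ and $\delta\ge 0$, and assume the set $\mathcal{F}=\{x\in\mathbb{R}^n:\|Ax-b\|\le\delta\}$ is nonempty. Consider the zero-norm problem $$\text{(P)}\qquad \min_{x\in\mathbb{R}^n}\{\|x\|_0:\ \|Ax-b\|\le\delta\}$$ and the problem $$\text{(MPEC)}\qquad \min_{x,v\in\mathbb{R}^n}\{\langle e,e-v\rangle:\ \|Ax-b\|\le\delta,\ \langle v,|x|\rangle=0,\ 0\le v\le e\}.$$ Then: (a) every locally optimal solution of (MPEC) has the form $(x^*,e-\operatorname{sign}(|x^*|))$ for some $x^*\in\mathbb{R}^n$; (b) $x^*$ is a locally optimal solution of (P) if and only if $(x^*,e-\operatorname{sign}(|x^*|))$ is a locally optimal solution of (MPEC).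
   Context: $\|\cdot\|$ is the Euclidean norm, $\|x\|_0$ is the number of nonzero components of $x$, $e\in\mathbb{R}^n$ is the vector of all ones, $|x|$ is the componentwise absolute value, $\operatorname{sign}$ is applied componentwise (so $\operatorname{sign}(|x|)_i=1$ if $x_i\neq0$ and $0$ otherwise), and inequalities between vectors are componentwise. *)

(* Defs.v *)
From mathcomp Require Import all_boot all_order all_algebra.
From mathcomp Require Import reals.
Set Implicit Arguments. Unset Strict Implicit. Unset Printing Implicit Defensive.
Import Order.TTheory GRing.Theory Num.Theory.
Local Open Scope ring_scope.

Section Defs.
Variable R : realType.

Definition enorm (k : nat) (x : 'cV[R]_k) : R := Num.sqrt (\sum_i x i 0 ^+ 2).

Definition znorm (n : nat) (x : 'cV[R]_n) : nat := #|[set i | x i 0 != 0]|.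

Definition evec (n : nat) : 'cV[R]_n := const_mx 1.

Definition vabs (n : nat) (x : 'cV[R]_n) : 'cV[R]_n := map_mx Num.norm x.
Definition vsign (n : nat) (x : 'cV[R]_n) : 'cV[R]_n := map_mx Num.sg x.

Definition inner (n : nat) (u w : 'cV[R]_n) : R := \sum_i u i 0 * w i 0.

Definition feasP (m n : nat) (A : 'M[R]_(m, n)) (b : 'cV[R]_m) (delta : R)
  (x : 'cV[R]_n) : Prop := enorm (A *m x - b) <= delta.

Definition P_locmin (m n : nat) (A : 'M[R]_(m, n)) (b : 'cV[R]_m) (delta : R)
  (xs : 'cV[R]_n) : Prop :=
  feasP A b delta xs /\
  exists eps : R, 0 < eps /\
    forall x, feasP A b delta x -> enorm (x - xs) < eps -> (znorm xs <= znorm x)%N.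

Definition feasMPEC (m n : nat) (A : 'M[R]_(m, n)) (b : 'cV[R]_m) (delta : R)
  (x v : 'cV[R]_n) : Prop :=
  [/\ enorm (A *m x - b) <= delta, inner v (vabs x) = 0 &
      forall i, 0 <= v i 0 <= 1].

Definition objMPEC (n : nat) (v : 'cV[R]_n) : R := inner (evec n) (evec n - v).

Definition MPEC_locmin (m n : nat) (A : 'M[R]_(m, n)) (b : 'cV[R]_m) (delta : R)
  (xs vs : 'cV[R]_n) : Prop :=
  feasMPEC A b delta xs vs /\
  exists eps : R, 0 < eps /\
    forall x v, feasMPEC A b delta x v ->
      enorm (col_mx (x - xs) (v - vs)) < eps -> objMPEC vs <= objMPEC v.

End Defs.

(* Main.v *)
Require Import Defs.
From mathcomp Require Import all_boot all_order all_algebra.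
From mathcomp Require Import reals.
From mathcomp Require Import ring lra.
Import Order.TTheory GRing.Theory Num.Theory.
Local Open Scope ring_scope.

Set Implicit Arguments.
Section Aux.
Variable R : realType.

Lemma comp_le_enorm k (x : 'cV[R]_k) i : `|x i 0| <= enorm x.
Proof.
rewrite /enorm -sqrtr_sqr ler_wsqrtr // (bigD1 i) //= lerDl.
by apply: sumr_ge0 => j _; rewrite sqr_ge0.
Qed.

Lemma enorm_col_le k (x y : 'cV[R]_k) : enorm x <= enorm (col_mx x y).
Proof.
rewrite /enorm ler_wsqrtr // big_split_ord /=.
under [X in _ <= X + _]eq_bigr => i _ do rewrite col_mxEu.
by rewrite lerDl; apply: sumr_ge0 => j _; rewrite sqr_ge0.
Qed.

Lemma enorm_col0 k (w : 'cV[R]_k) : enorm (col_mx (0 : 'cV[R]_k) w) = enorm w.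
Proof.
rewrite /enorm big_split_ord /=.
rewrite big1 ?add0r; last by move=> i _; rewrite col_mxEu mxE expr0n.
by apply: congr1; apply: eq_bigr => i _; rewrite col_mxEd.
Qed.

Lemma znormE n (x : 'cV[R]_n) :
  (znorm x)%:R = \sum_i ((x i 0 != 0)%:R : R).
Proof.
rewrite /znorm -sum1_card natr_sum big_mkcond /=; apply: eq_bigr => i _.
by rewrite inE; case: ifP.
Qed.

Lemma sgabs (a : R) : Num.sg `|a| = (a != 0)%:R.
Proof.
have [->|h] := eqVneq a 0; first by rewrite normr0 sgr0.
by rewrite gtr0_sg // normr_gt0.
Qed.

Lemma lsc n (xs : 'cV[R]_n) : exists eps : R, 0 < eps /\
  forall x, enorm (x - xs) < eps -> forall i, xs i 0 != 0 -> x i 0 != 0.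
Proof.
suff [eps [ep H]] : exists eps : R, 0 < eps /\
   forall i, i \in enum 'I_n -> xs i 0 != 0 -> eps <= `|xs i 0|.
  exists eps; split => // x hx i hi; apply/negP => /eqP h0.
  have := comp_le_enorm (x - xs) i; rewrite !mxE h0 sub0r normrN => h1.
  have := H i (mem_enum _ i) hi => h2.
  have := lt_le_trans (le_lt_trans h1 hx) h2; by rewrite ltxx.
elim: (enum 'I_n) => [|j s [e [ep H]]]; first by exists 1.
exists (Num.min e (if xs j 0 != 0 then `|xs j 0| else 1)); split.
  rewrite lt_min ep /=; case: ifP => h //; by rewrite normr_gt0.
move=> i; rewrite inE => /orP [/eqP ->|hi] hx.
  by rewrite ge_min hx lexx orbT.
by rewrite ge_min H.
Qed.



Lemma vzero m n (A : 'M[R]_(m, n)) b delta x v i :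
  feasMPEC A b delta x v -> x i 0 != 0 -> v i 0 = 0.
Proof.
move=> [_ hin hb] hi.
have H := (@psumr_eq0P R _ xpredT (fun j => v j 0 * vabs x j 0)).
have nn : forall j, xpredT j -> 0 <= v j 0 * vabs x j 0.
  by move=> j _; rewrite mxE mulr_ge0 //; case/andP: (hb j).
have /eqP := H nn hin i isT.
by rewrite mxE mulf_eq0 normr_eq0 (negbTE hi) orbF => /eqP.
Qed.

Lemma feas_vs m n (A : 'M[R]_(m, n)) b delta xs :
  feasP A b delta xs -> feasMPEC A b delta xs (evec R n - vsign (vabs xs)).
Proof.
move=> hf; split; first exact: hf.
  rewrite /inner big1 // => i _; rewrite !mxE sgabs.
  have [->|h] := eqVneq (xs i 0) 0; first by rewrite normr0 mulr0.
  by rewrite subrr mul0r.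
move=> i; rewrite !mxE sgabs.
by case: (xs i 0 != 0); rewrite /= ?subr0 ?subrr ?ler01 ?lexx.
Qed.

Lemma obj_vs n (xs : 'cV[R]_n) :
  objMPEC (evec R n - vsign (vabs xs)) = (znorm xs)%:R.
Proof.
rewrite /objMPEC /inner znormE; apply: eq_bigr => i _.
rewrite /evec !mxE sgabs mul1r; lra.
Qed.

Lemma obj_ge m n (A : 'M[R]_(m, n)) b delta x v :
  feasMPEC A b delta x v -> (znorm x)%:R <= objMPEC v.
Proof.
move=> hf; rewrite znormE /objMPEC /inner; apply: ler_sum => i _.
rewrite /evec !mxE mul1r.
have [h|h] := eqVneq (x i 0) 0.
  case: hf => _ _ hb; case/andP: (hb i) => _ h1; rewrite /=; lra.
by rewrite (vzero i hf h) /= subr0.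
Qed.


Lemma parta m n (A : 'M[R]_(m, n)) b delta x v :
  MPEC_locmin A b delta x v -> v = evec R n - vsign (vabs x).
Proof.
move=> [hf [eps [ep H]]].
apply/matrixP => i j; rewrite (ord1 j) {j} !mxE sgabs.
have [h|h] := eqVneq (x i 0) 0; last by rewrite (vzero i hf h) /= subrr.
rewrite /= subr0.
have hf' := hf; case: hf' => hA hin hb.
case/andP: (hb i) => h0 h1.
apply/eqP; rewrite eq_le h1 /= leNgt; apply/negP => hlt.
pose t := Num.min (1 - v i 0) (eps / 2).
have tp : 0 < t by rewrite lt_min subr_gt0 hlt divr_gt0.
have ht1 : t <= 1 - v i 0 by rewrite ge_min lexx.
have ht2 : t <= eps / 2 by rewrite ge_min lexx orbT.
pose w : 'cV[R]_n := \col_j (if j == i then t else 0).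
have sumw : \sum_j w j 0 = t.
  rewrite (bigD1 i) //= big1 ?addr0; first by rewrite mxE eqxx.
  by move=> j hj; rewrite mxE (negbTE hj).
have enw : enorm w = t.
  rewrite /enorm (bigD1 i) //= big1 ?addr0.
    by rewrite mxE eqxx sqrtr_sqr gtr0_norm.
  by move=> j hj; rewrite mxE (negbTE hj) expr0n.
have feas : feasMPEC A b delta x (v + w).
  split => //.
    have -> : inner (v + w) (vabs x) = inner v (vabs x) + inner w (vabs x).
      by rewrite /inner -big_split; apply: eq_bigr => j _; rewrite mxE mulrDl.
    rewrite hin add0r /inner big1 // => j _; rewrite !mxE.
    by case: eqP => [->|_]; rewrite ?h ?normr0 ?mulr0 ?mul0r.
  move=> j; rewrite !mxE; case: eqP => [->|_]; last by rewrite addr0 hb.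
  apply/andP; split; lra.
have close : enorm (col_mx (x - x) (v + w - v)) < eps.
  rewrite subrr addrC addKr enorm_col0 enw; lra.
have := H _ _ feas close.
have -> : objMPEC (v + w) = objMPEC v - t.
  rewrite /objMPEC /inner -sumw -sumrB; apply: eq_bigr => j _.
  rewrite /evec !mxE; ring.
lra.
Qed.

End Aux.

Theorem proposition2p1 (R : realType) (m n : nat) (A : 'M[R]_(m, n))
  (b : 'cV[R]_m) (delta : R) :
  0 <= delta ->
  (exists x : 'cV[R]_n, feasP A b delta x) ->
  (forall x v : 'cV[R]_n, MPEC_locmin A b delta x v ->
     v = evec R n - vsign (vabs x)) /\
  (forall xs : 'cV[R]_n,
     P_locmin A b delta xs <-> MPEC_locmin A b delta xs (evec R n - vsign (vabs xs))).
Proof.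
move=> _ _; split; first by move=> x v; apply: parta.
move=> xs; split.
  move=> [hf [eps [ep H]]]; split; first exact: feas_vs.
  exists eps; split => // x v hxv hc.
  rewrite obj_vs; apply: le_trans (obj_ge hxv); rewrite ler_nat.
  apply: H; first by case: hxv.
  apply: le_lt_trans hc; exact: enorm_col_le.
move=> [[hA _ _] _]; split; first exact: hA.
have [eps [ep H]] := lsc R xs; exists eps; split => // x _ hx.
rewrite /znorm; apply: subset_leq_card; apply/subsetP => i; rewrite !inE.
exact: H.
Qed.
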